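(* Let $S\subseteq\{0,1\}^n$, $1\le m\le n$, $f\in[0,1/2]$, and $h\in_R\mathcal{H}^f_{m\times n}$. Then $$|S|\le\min\left\{z\ \middle|\ \frac{1}{1+2^{2m}v(z)/z^2}>\Pr[S(h)\ge1]\right\},$$ where $z$ ranges over integers $1\le z\le 2^n$ and the minimum of the empty set is $+\infty$.
   Context: $h\in_R\mathcal{H}^f_{m\times n}$ means $h(x)=Ax+b\bmod 2$ with $A\in\{0,1\}^{m\times n}$ having i.i.d. entries with $\Pr[A_{ij}=1]=f$ and $b\in\{0,1\}^m$ uniform and independent of $A$; $S(h)=|\{x\in S:h(x)=0\}|$. For integer $1\le q\le 2^n+1$: $w^*(n,q)=\max\{w\ge0:\sum_{j=1}^w\binom{n}{j}\le q-1\}$, $r(n,q)=q-1-\sum_{w=1}^{w^*(n,q)}\binom{n}{w}$, $$(q-1)\,\epsilon(n,m,q,f)=\sum_{w=1}^{w^*(n,q)}\binom{n}{w}\frac{(1+(1-2f)^w)^m}{2^m}+\frac{r(n,q)}{2^m}(1+(1-2f)^{w^*(n,q)+1})^m,$$ and $v(q)=\frac{q}{2^m}\left(1+\epsilon(n,m,q,f)(q-1)-\frac{q}{2^m}\right)$. *)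

(* Defs.v *)
From HB Require Import structures.
From mathcomp Require Import all_boot all_order all_algebra.
From mathcomp Require Import reals.
Set Implicit Arguments. Unset Strict Implicit. Unset Printing Implicit Defensive.
Import Order.TTheory GRing.Theory Num.Theory.
Local Open Scope ring_scope.

(* Vectors in {0,1}^n are column vectors over GF(2) = 'F_2. *)

Definition weightA (R : realType) (m n : nat) (f : R) (A : 'M['F_2]_(m, n)) : R :=
  \prod_(i < m) \prod_(j < n) (if A i j == 1 then f else 1 - f).

(* S(h) = |{x in S : A x + b = 0}| for h(x) = A x + b mod 2. *)
Definition Sh (m n : nat) (S : {set 'cV['F_2]_n})
  (A : 'M['F_2]_(m, n)) (b : 'cV['F_2]_m) : nat :=
  #|[set x in S | A *m x + b == 0]|.

(* Pr[S(h) >= 1] for h drawn from H^f_{m x n} (b uniform, independent of A). *)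
Definition PrSh_ge1 (R : realType) (m n : nat) (f : R) (S : {set 'cV['F_2]_n}) : R :=
  \sum_(A : 'M['F_2]_(m, n)) \sum_(b : 'cV['F_2]_m)
     weightA f A * (2%:R ^+ m)^-1 * (if (1 <= Sh S A b)%N then 1 else 0).

Definition wstar (n q : nat) : nat :=
  \max_(w < n.+1 | (\sum_(1 <= j < w.+1) 'C(n, j) <= q.-1)%N) w.

Definition rnq (n q : nat) : nat :=
  (q.-1 - \sum_(1 <= w < (wstar n q).+1) 'C(n, w))%N.

(* (q-1) * eps(n,m,q,f) *)
Definition eps_q (R : realType) (n m q : nat) (f : R) : R :=
  \sum_(1 <= w < (wstar n q).+1)
     ('C(n, w))%:R * ((1 + (1 - 2 * f) ^+ w) ^+ m / 2%:R ^+ m)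
  + (rnq n q)%:R / 2%:R ^+ m * (1 + (1 - 2 * f) ^+ (wstar n q).+1) ^+ m.

Definition vq (R : realType) (n m q : nat) (f : R) : R :=
  q%:R / 2%:R ^+ m * (1 + eps_q n m q f - q%:R / 2%:R ^+ m).

(* Main.v *)
Require Import Defs.
From HB Require Import structures.
From mathcomp Require Import all_boot all_order all_algebra.
From mathcomp Require Import reals.
From mathcomp Require Import ring lra.
Import Order.TTheory GRing.Theory Num.Theory.
Local Open Scope ring_scope.
Lemma F2_cases (a : 'F_2) : a = 0 \/ a = 1.
Proof. case: a => [[|[|k]] Hk]; [left|right|by []]; exact: val_inj. Qed.
Lemma sumF2 (R : nzRingType) (F : 'F_2 -> R) : \sum_(a : 'F_2) F a = F 0 + F 1.
Proof. rewrite (bigD1 0) //= (big_pred1 1) // => a /=.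
by case: (F2_cases a) => ->. Qed.

Definition chi (R : realType) (a : 'F_2) : R := if a == 0 then 1 else -1.
Lemma chiD (R : realType) (a b : 'F_2) : chi R (a + b) = chi R a * chi R b.
Proof.
case: (F2_cases a) => ->; case: (F2_cases b) => ->; rewrite /chi ?add0r ?addr0 ?eqxx ?mul1r ?mulr1 //.
by rewrite mulrNN mulr1.
Qed.
Lemma chi_sum (R : realType) (I : finType) (x : I -> 'F_2) :
  chi R (\sum_i x i) = \prod_i chi R (x i).
Proof. by apply: (big_morph (chi R)); [exact: chiD | rewrite /chi eqxx]. Qed.
Lemma ind_chi (R : realType) (a : 'F_2) : ((a == 0)%:R : R) = (1 + chi R a) / 2%:R.
Proof.
rewrite /chi; case: (a == 0) => /=.
  by field.
by rewrite subrr mul0r.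
Qed.
Definition wgt {R : realType} (f : R) (a : 'F_2) : R := if a == 1 then f else 1 - f.
Definition wt {n} (d : 'cV['F_2]_n) : nat := #|[set j | d j 0 != 0]|.

Lemma rowsum (R : realType) n (f : R) (d : 'cV['F_2]_n) :
  \sum_(r : {ffun 'I_n -> 'F_2}) (\prod_j wgt f (r j)) * ((\sum_j r j * d j 0 == 0)%:R)
  = (1 + (1 - 2 * f) ^+ wt d) / 2%:R.
Proof.
under eq_bigr => r _ do rewrite ind_chi chi_sum mulrA mulrDr mulr1 -big_split /=.
rewrite -mulr_suml big_split /=.
rewrite -(bigA_distr_bigA (fun j a => wgt f a)) /=.
rewrite -(bigA_distr_bigA (fun j a => wgt f a * chi R (a * d j 0))) /=.
congr (_ / _); congr (_ + _).
  apply: big1 => j _; rewrite sumF2 /wgt /=.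
  idtac.
  by rewrite subrK.
under eq_bigr => j _ do rewrite sumF2 mul0r mul1r.
rewrite /wt cardsE -prodr_const [RHS]big_mkcond /=; apply: eq_bigr => j _.
rewrite /wgt /chi eqxx /=.
rewrite unfold_in; case: (F2_cases (d j 0)) => -> /=.
  ring.
ring.
Qed.

Lemma sum_mx (R : realType) m n (F : 'M['F_2]_(m,n) -> R) :
  \sum_A F A = \sum_(g : {ffun 'I_m -> {ffun 'I_n -> 'F_2}}) F (\matrix_(i,j) g i j).
Proof.
rewrite (reindex (fun g : {ffun 'I_m -> {ffun 'I_n -> 'F_2}} => \matrix_(i,j) g i j)) //.
exists (fun A : 'M['F_2]_(m,n) => [ffun i => [ffun j => A i j]]) => [g _ | A _].
  by apply/ffunP => i; apply/ffunP => j; rewrite !ffunE mxE.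
by apply/matrixP => i j; rewrite mxE !ffunE.
Qed.

Lemma ind_mx (R : realType) m n (M : 'M['F_2]_(m,n)) (d : 'cV['F_2]_n) :
  ((M *m d == 0)%:R : R) = \prod_i ((\sum_j M i j * d j 0 == 0)%:R).
Proof.
case: (boolP (M *m d == 0)) => [/eqP H | H].
  rewrite /= big1 // => i _.
  have := congr1 (fun X : 'M['F_2]_(m,1) => X i 0) H; rewrite !mxE => ->.
  by rewrite eqxx.
have [i Hi] : exists i, (\sum_j M i j * d j 0 != 0).
  apply/existsP; apply: contraR H; rewrite negb_exists => /forallP H.
  apply/eqP/matrixP => i k; rewrite ord1 !mxE.
  by move: (H i); rewrite negbK => /eqP.
by rewrite (bigD1 i) //= (negbTE Hi) mul0r.
Qed.

Lemma Gval (R : realType) m n (f : R) (d : 'cV['F_2]_n) :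
  \sum_(A : 'M['F_2]_(m,n)) weightA f A * ((A *m d == 0)%:R)
  = ((1 + (1 - 2 * f) ^+ wt d) / 2%:R) ^+ m.
Proof.
rewrite sum_mx.
transitivity (\sum_(g : {ffun 'I_m -> {ffun 'I_n -> 'F_2}})
   \prod_i ((\prod_j wgt f (g i j)) * ((\sum_j g i j * d j 0 == 0)%:R))).
  apply: eq_bigr => g _; rewrite big_split /= ind_mx; congr (_ * _).
    rewrite /weightA; apply: eq_bigr => i _; apply: eq_bigr => j _.
    by rewrite mxE.
  apply: eq_bigr => i _; congr (nat_of_bool _)%:R; congr (_ == _); apply: eq_bigr => j _; by rewrite mxE.
rewrite -(bigA_distr_bigA (fun i (r : {ffun 'I_n -> 'F_2}) =>
   (\prod_j wgt f (r j)) * ((\sum_j r j * d j 0 == 0)%:R))) /=.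
under eq_bigr do rewrite rowsum.
by rewrite prodr_const card_ord.
Qed.
Definition gw {R : realType} (m : nat) (f : R) (w : nat) : R :=
  (1 + (1 - 2 * f) ^+ w) ^+ m / 2%:R ^+ m.

Lemma gw_ge0 (R : realType) m (f : R) w : 0 <= f -> f <= 2%:R^-1 -> 0 <= gw m f w.
Proof.
move=> f0 f1; have t0 : 0 <= 1 - 2 * f by lra.
rewrite /gw; apply: divr_ge0; apply: exprn_ge0 => //; apply: addr_ge0 => //; exact: exprn_ge0.
Qed.

Lemma gw_mono (R : realType) m (f : R) w1 w2 : 0 <= f -> f <= 2%:R^-1 ->
  (w1 <= w2)%N -> gw m f w2 <= gw m f w1.
Proof.
move=> f0 f1 hw; have t0 : 0 <= 1 - 2 * f by lra.
have t1 : 1 - 2 * f <= 1 by lra.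
rewrite /gw ler_pM2r ?invr_gt0 ?exprn_gt0 ?ltr0n //.
apply: lerXn2r; rewrite ?nnegrE.
- by apply: addr_ge0 => //; exact: exprn_ge0.
- by apply: addr_ge0 => //; exact: exprn_ge0.
by rewrite lerD2l; apply: ler_wiXn2l.
Qed.

Lemma wt_gt0 n (d : 'cV['F_2]_n) : d != 0 -> (0 < wt d)%N.
Proof.
move=> Hd; rewrite lt0n; apply: contra Hd => /eqP /cards0_eq H.
apply/eqP/matrixP => j k; rewrite ord1 mxE.
have : j \notin [set j | d j 0 != 0] by rewrite H inE.
by rewrite inE negbK => /eqP.
Qed.

Lemma card_wt n w : (#|[set d : 'cV['F_2]_n | wt d == w]| <= 'C(n, w))%N.
Proof.
pose supp (d : 'cV['F_2]_n) := [set j | d j 0 != 0].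
have inj : injective supp.
  move=> d1 d2 H; apply/matrixP => j k; rewrite ord1.
  have := congr1 (fun B : {set 'I_n} => j \in B) H; rewrite /= !inE.
  by case: (F2_cases (d1 j 0)) => ->; case: (F2_cases (d2 j 0)) => ->.
rewrite -(card_imset _ inj) -[n in 'C(n, _)]card_ord -card_draws.
apply: subset_leq_card; apply/subsetP => B /imsetP [d]; rewrite !inE => Hd ->.
exact: Hd.
Qed.

Lemma wstar_spec n q : (wstar n q <= n)%N /\ (\sum_(1 <= j < (wstar n q).+1) 'C(n, j) <= q.-1)%N.
Proof.
rewrite /wstar.
have := @eq_bigmax_cond _ (fun w : 'I_n.+1 => (\sum_(1 <= j < w.+1) 'C(n, j) <= q.-1)%N) (fun w => val w).
case.
  apply/card_gt0P; exists ord0; rewrite /= unfold_in /=.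
  by rewrite big_geq.
move=> i0; rewrite unfold_in => Hi ->; split => //.
by rewrite -ltnS ltn_ord.
Qed.

Lemma sum_wt_card (R : realType) n w :
  \sum_(d : 'cV['F_2]_n) (((wt d == w) : nat)%:R : R) = (#|[set d : 'cV['F_2]_n | wt d == w]|)%:R.
Proof.
rewrite -sum1_card natr_sum [RHS]big_mkcond /=; apply: eq_bigr => d _.
by rewrite inE; case: (wt d == w).
Qed.

Lemma comb (R : realType) n m q (f : R) (D : {set 'cV['F_2]_n}) :
  0 <= f -> f <= 2%:R^-1 -> (0 : 'cV['F_2]_n) \notin D -> #|D| = q.-1 ->
  \sum_(d in D) gw m f (wt d) <= eps_q n m q f.
Proof.
move=> f0 f1 D0 HD.
have [hWn hW] := wstar_spec n q.
rewrite /eps_q /rnq.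
set W := wstar n q.
set c := gw m f W.+1.
have step1 : \sum_(d in D) gw m f (wt d) <=
   \sum_(d in D) (c + (if (wt d <= W)%N then gw m f (wt d) - c else 0)).
  apply: ler_sum => d _; case: ifP => h; first by rewrite addrC subrK.
  by rewrite addr0; apply: gw_mono => //; rewrite ltnNge h.
rewrite big_split /= sumr_const HD -big_mkcondr /= in step1.
have step2 : \sum_(d in D | (wt d <= W)%N) (gw m f (wt d) - c) =
   \sum_(1 <= w < W.+1) (\sum_(d in D | (wt d <= W)%N) (((wt d == w) : nat)%:R : R)) * (gw m f w - c).
  transitivity (\sum_(d in D | (wt d <= W)%N) \sum_(1 <= w < W.+1)
        (((wt d == w) : nat)%:R : R) * (gw m f w - c)).
    apply: eq_bigr => d /andP [dD hd].
    have d0 : d != 0 by apply: contraNneq D0 => <-.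
    rewrite (bigD1_seq (wt d)) /= ?mem_index_iota ?iota_uniq ?wt_gt0 ?ltnS //.
    rewrite eqxx mul1r big1 ?addr0 // => w hw.
    by rewrite eq_sym (negbTE hw) mul0r.
  rewrite exchange_big /=; apply: eq_bigr => w _.
  by rewrite mulr_suml.
have step3 : \sum_(1 <= w < W.+1) (\sum_(d in D | (wt d <= W)%N) (((wt d == w) : nat)%:R : R)) * (gw m f w - c)
   <= \sum_(1 <= w < W.+1) ('C(n, w))%:R * (gw m f w - c).
  apply: ler_sum_nat => w /andP [_ hw].
  apply: ler_wpM2r.
    by rewrite subr_ge0; apply: gw_mono => //; apply: ltnW.
  apply: (le_trans (y := \sum_(d : 'cV['F_2]_n) (((wt d == w) : nat)%:R : R))).
    rewrite [X in X <= _]big_mkcond /=; apply: ler_sum => d _.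
    by case: ifP.
  by rewrite (sum_wt_card R n w) ler_nat card_wt.
have HqD : q.-1 = (\sum_(1 <= w < W.+1) 'C(n, w) + (q.-1 - \sum_(1 <= w < W.+1) 'C(n, w)))%N.
  by rewrite subnKC.
apply: (le_trans step1).
rewrite step2.
apply: le_trans; first by apply: lerD; [exact: lexx | exact: step3].
set r := (q.-1 - _)%N.
rewrite HqD -/r -(mulr_natr c) natrD natr_sum.
have -> : \sum_(1 <= w < W.+1) ('C(n, w))%:R * (gw m f w - c) =
   \sum_(1 <= w < W.+1) ('C(n, w))%:R * gw m f w - \sum_(1 <= w < W.+1) ('C(n, w))%:R * c.
  by rewrite -sumrB; apply: eq_bigr => w _; rewrite mulrBr.
have -> : c * (\sum_(1 <= w < W.+1) ('C(n, w))%:R + r%:R) =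
    \sum_(1 <= w < W.+1) ('C(n, w))%:R * c + r%:R * c.
  rewrite mulrDr mulr_sumr; congr (_ + _); last by rewrite mulrC.
  by apply: eq_bigr => w _; rewrite mulrC.
have -> : r%:R / 2%:R ^+ m * (1 + (1 - 2 * f) ^+ W.+1) ^+ m = r%:R * c.
  by rewrite /c /gw; ring.
rewrite /gw.
rewrite le_eqVlt; apply/orP; left; apply/eqP; ring.
Qed.

Lemma sum_b (R : realType) m (u : 'cV['F_2]_m) (F : 'cV['F_2]_m -> R) :
  \sum_(b : 'cV['F_2]_m) ((((u + b == 0) : nat)%:R : R) * F b) = F (- u).
Proof.
rewrite (bigD1 (- u)) //= subrr eqxx mul1r big1 ?addr0 // => b Hb.
have -> : (u + b == 0) = false.
  by apply/negbTE; apply: contra Hb; rewrite addrC addr_eq0.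
by rewrite mul0r.
Qed.

Lemma Sh_sum (R : realType) m n (T : {set 'cV['F_2]_n}) (A : 'M['F_2]_(m,n)) b :
  ((Sh T A b)%:R : R) = \sum_(x in T) (((A *m x + b == 0) : nat)%:R).
Proof.
rewrite /Sh -sum1_card natr_sum [LHS]big_mkcond [RHS]big_mkcond /=.
apply: eq_bigr => x _; rewrite inE.
by case: (x \in T); case: (A *m x + b == 0).
Qed.

Lemma pair_term (R : realType) m n (f : R) (x y : 'cV['F_2]_n) :
  \sum_(A : 'M['F_2]_(m,n)) \sum_(b : 'cV['F_2]_m) weightA f A * (2%:R ^+ m)^-1 *
     ((((A *m x + b == 0) : nat)%:R : R) * (((A *m y + b == 0) : nat)%:R))
  = (2%:R ^+ m)^-1 * gw m f (wt (y - x)).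
Proof.
under eq_bigr => A _ do
  rewrite -mulr_sumr (@sum_b R m (A *m x) (fun b => (((A *m y + b == 0) : nat)%:R : R))) -mulmxBr.
under eq_bigr => A _ do rewrite mulrAC.
by rewrite -mulr_suml Gval mulrC /gw expr_div_n.
Qed.

Lemma wt0 n : wt (0 : 'cV['F_2]_n) = 0%N.
Proof.
rewrite /wt (_ : [set j | _] = set0) ?cards0 //.
by apply/setP => j; rewrite !inE mxE eqxx.
Qed.

Lemma gw0 (R : realType) m (f : R) : gw m f 0 = 1.
Proof.
rewrite /gw expr0 (_ : 1 + 1 = 2%:R) // divff // expf_neq0 // pnatr_eq0 //.
Qed.

Lemma weightA_ge0 (R : realType) m n (f : R) (A : 'M['F_2]_(m,n)) :
  0 <= f -> f <= 2%:R^-1 -> 0 <= weightA f A.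
Proof.
move=> f0 f1; rewrite /weightA; apply: prodr_ge0 => i _; apply: prodr_ge0 => j _.
case: ifP => _ //; lra.
Qed.

Theorem lemma3 (R : realType) (n m : nat) (f : R) (S : {set 'cV['F_2]_n}) :
  (1 <= m)%N -> (m <= n)%N -> 0 <= f -> f <= 2%:R^-1 ->
  forall z : nat, (1 <= z)%N -> (z <= 2 ^ n)%N ->
    (1 + 2%:R ^+ (2 * m) * vq n m z f / (z%:R ^+ 2))^-1 > PrSh_ge1 m f S ->
    (#|S| <= z)%N.
Proof.
move=> m1 mn f0 f1 z z1 zn H.
rewrite leqNgt; apply/negP => Hz.
pose T := [set x | x \in take z (enum S)].
have TS : T \subset S.
  by apply/subsetP => x; rewrite inE => /mem_take; rewrite mem_enum.
have cT : #|T| = z.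
  rewrite cardsE. have /card_uniqP -> : uniq (take z (enum S)) by rewrite take_uniq // enum_uniq.
  by rewrite size_takel // -cardE ltnW.
set a : R := 2%:R ^+ m.
have a0 : 0 < a by rewrite exprn_gt0 // ltr0n.
set c : R := a^-1.
set eps := eps_q n m z f.
have zr0 : (0 : R) < z%:R by rewrite ltr0n.
pose P (A : 'M['F_2]_(m,n)) (b : 'cV['F_2]_m) := weightA f A * c.
have P0 : forall A b, 0 <= P A b.
  by move=> A b; rewrite /P mulr_ge0 ?weightA_ge0 // invr_ge0 ltW.
pose E := \sum_A \sum_b P A b * (Sh T A b)%:R.
pose E2 := \sum_A \sum_b P A b * ((Sh T A b)%:R ^+ 2).
pose PrT := \sum_A \sum_b P A b * (if (1 <= Sh T A b)%N then 1 else 0).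
have HPr : PrT <= PrSh_ge1 m f S.
  apply: ler_sum => A _; apply: ler_sum => b _; apply: ler_wpM2l => //.
  case: ifP => h1; last by case: ifP => _; rewrite ?ler01.
  rewrite ifT //; apply: leq_trans h1 _; apply: subset_leq_card.
  by apply/subsetP => x; rewrite !inE => /andP [xT Px]; rewrite Px andbT; move: xT => /mem_take; rewrite mem_enum.
have HE : E = z%:R * c.
  rewrite /E.
  transitivity (\sum_A \sum_b \sum_(x in T) P A b * ((((A *m x + b == 0) : nat)%:R : R) * (((A *m x + b == 0) : nat)%:R))).
    apply: eq_bigr => A _; apply: eq_bigr => b _; rewrite Sh_sum mulr_sumr; apply: eq_bigr => x _.
    by case: (A *m x + b == 0); rewrite ?mulr1 ?mulr0.
  rewrite (eq_bigr (fun A : 'M['F_2]_(m,n) => \sum_(x in T) \sum_b P A b * ((((A *m x + b == 0) : nat)%:R : R) * (((A *m x + b == 0) : nat)%:R)))); last by move=> A _; rewrite exchange_big.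
  rewrite exchange_big /=.
  rewrite (eq_bigr (fun x => c)); last first.
    move=> x _; rewrite /P; have := pair_term R m n f x x; rewrite subrr wt0 gw0 mulr1; exact.
  by rewrite sumr_const cT mulr_natl.
have HE2 : E2 = \sum_(x in T) \sum_(y in T) c * gw m f (wt (y - x)).
  rewrite /E2.
  transitivity (\sum_A \sum_b \sum_(x in T) \sum_(y in T) P A b * ((((A *m x + b == 0) : nat)%:R : R) * (((A *m y + b == 0) : nat)%:R))).
    apply: eq_bigr => A _; apply: eq_bigr => b _; rewrite Sh_sum expr2 big_distrlr /= mulr_sumr.
    by apply: eq_bigr => x _; rewrite mulr_sumr.
  rewrite (eq_bigr (fun A : 'M['F_2]_(m,n) => \sum_(x in T) \sum_b \sum_(y in T) P A b * ((((A *m x + b == 0) : nat)%:R : R) * (((A *m y + b == 0) : nat)%:R)))); last by move=> A _; rewrite exchange_big.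
  rewrite exchange_big /=.
  apply: eq_bigr => x _.
  rewrite (eq_bigr (fun A : 'M['F_2]_(m,n) => \sum_(y in T) \sum_b P A b * ((((A *m x + b == 0) : nat)%:R : R) * (((A *m y + b == 0) : nat)%:R)))); last by move=> A _; rewrite exchange_big.
  rewrite exchange_big /=.
  apply: eq_bigr => y _; rewrite /P; exact: pair_term.
have Hx : forall x, x \in T -> \sum_(y in T) gw m f (wt (y - x)) <= 1 + eps.
  move=> x xT.
  rewrite (bigD1 x) //= subrr wt0 gw0 lerD2l.
  pose D := [set y - x | y in T :\ x].
  have -> : \sum_(y in T | y != x) gw m f (wt (y - x)) = \sum_(d in D) gw m f (wt d).
    rewrite big_imset /=; last by move=> y1 y2 _ _; apply: addIr.
    by apply: eq_bigl => y; rewrite in_setD1 andbC.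
  apply: comb => //.
    apply/imsetP => [[y]]; rewrite in_setD1 => /andP [yx _] /eqP.
    by rewrite eq_sym subr_eq0 (negbTE yx).
  rewrite card_imset; last exact: addIr.
  by move: (cardsD1 x T); rewrite xT cT add1n => ->.
have [x0 x0T] : exists x, x \in T.
  by apply/set0Pn; rewrite -card_gt0 cT.
have eps0 : 0 <= eps.
  have := Hx x0 x0T; rewrite (bigD1 x0) //= subrr wt0 gw0 lerD2l.
  apply: le_trans; apply: sumr_ge0 => y _; exact: gw_ge0.
have HE2le : E2 <= E * (1 + eps).
  rewrite HE2 HE.
  apply: (le_trans (y := \sum_(x in T) c * (1 + eps))).
    apply: ler_sum => x xT; rewrite -mulr_sumr; apply: ler_wpM2l; [by rewrite invr_ge0 ltW | exact: Hx].
  by rewrite sumr_const cT -mulrA mulr_natl.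
set s := 1 + eps.
have s0 : 0 < s by rewrite /s; lra.
have HPZ : 2%:R * s * E - s ^+ 2 * PrT <= E2.
  have -> : 2%:R * s * E - s ^+ 2 * PrT =
     \sum_A \sum_b P A b * (2%:R * s * (Sh T A b)%:R - s ^+ 2 * (if (1 <= Sh T A b)%N then 1 else 0)).
    rewrite /E /PrT mulr_sumr mulr_sumr -sumrB; apply: eq_bigr => A _.
    rewrite mulr_sumr mulr_sumr -sumrB; apply: eq_bigr => b _; ring.
  apply: ler_sum => A _; apply: ler_sum => b _; apply: ler_wpM2l => //.
  case: (Sh T A b) => [|k] /=; first by rewrite ?natr0 !mulr0 subrr sqr_ge0.
  have := sqr_ge0 (k.+1%:R - s); lra.
have Hs : E <= s * PrT.
  have h : s * E <= s * (s * PrT).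
    have := le_trans HPZ HE2le; rewrite mulrA -expr2 -/s [E * s]mulrC; lra.
  by rewrite ler_pM2l in h.
have Hexp : 1 + 2%:R ^+ (2 * m) * vq n m z f / (z%:R ^+ 2) = a * s / z%:R.
  rewrite /vq -/a -/eps /s mulnC exprM -/a; field.
  by rewrite !gt_eqF.
rewrite Hexp invf_div ltr_pdivlMr in H; last by rewrite mulr_gt0.
have HEc : E * a = z%:R by rewrite HE /c mulrAC -mulrA divff ?gt_eqF // mulr1.
have h1 : 0 <= (PrSh_ge1 m f S - PrT) * (a * s) by rewrite mulr_ge0 ?subr_ge0 // ltW ?mulr_gt0.
have h2 : 0 <= (s * PrT - E) * a by rewrite mulr_ge0 ?subr_ge0 // ltW.
nra.
Qed.
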